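(* In a hierarchical tensor factorization with mode tree $\mathcal T$, for any $\nu\in\mathrm{int}(\mathcal T)$ and $r\in[R_{Pa(\nu)}]$: $$\|\mathcal W^{(\nu,r)}\|\le\|W^{(\nu)}_{:,r}\|\cdot\prod_{\nu_c\in C(\nu)}\|\mathcal W^{(\nu_c,:)}\|.$$
   Context: Fix $N\in\mathbb N$, $D_1,\dots,D_N\in\mathbb N$; $[K]:=\{1,\dots,K\}$; norms are Frobenius norms; $\otimes$ the tensor product. A mode tree $\mathcal T$ over $[N]$ is a rooted tree whose nodes are labeled by subsets of $[N]$, with exactly $N$ leaves labeled $\{1\},\dots,\{N\}$, and where each interior node's label is the union of its children's labels; nodes are identified with labels, root $[N]$, $\mathrm{int}(\mathcal T)$ interior nodes, $Pa(\nu)$ parent, $C(\nu)$ children (fixed order). A hierarchical tensor factorization has $R_\nu\in\mathbb N$ ($\nu\in\mathrm{int}(\mathcal T)$), $R_{Pa([N])}:=1$, $R_{\{n\}}:=D_n$, weight matrices $W^{(\nu)}\in\mathbb R^{R_\nu\times R_{Pa(\nu)}}$. Intermediate tensors: $\mathcal W^{(\{n\},r)}:=W^{(\{n\})}_{:,r}$; for $\nu\in\mathrm{int}(\mathcal T)\setminus\{[N]\}$ (leaves to root), $r\in[R_{Pa(\nu)}]$: $\mathcal W^{(\nu,r)}:=\pi_\nu\big(\sum_{r'=1}^{R_\nu}W^{(\nu)}_{r',r}\bigotimes_{\nu_c\in C(\nu)}\mathcal W^{(\nu_c,r')}\big)$; end tensor $\mathcal W_H:=\pi_{[N]}\big(\sum_{r'=1}^{R_{[N]}}W^{([N])}_{r',1}\bigotimes_{\nu_c\in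 C([N])}\mathcal W^{(\nu_c,r')}\big)$, where $\pi_\nu$ permutes modes (ordered by children, each child's elements ascending) into ascending order of the elements of $\nu$; by convention $\mathcal W^{([N],1)}:=\mathcal W_H$. For $\nu\in\mathcal T$, $\mathcal W^{(\nu,:)}$ is the tensor obtained by stacking $(\mathcal W^{(\nu,r)})_{r=1}^{R_{Pa(\nu)}}$ along an additional last mode, i.e. $\mathcal W^{(\nu,:)}_{:,\dots,:,r}=\mathcal W^{(\nu,r)}$. *)

(* Defs.v *)
From HB Require Import structures.
From mathcomp Require Import all_boot all_order all_algebra.
From Stdlib Require List.
Set Implicit Arguments. Unset Strict Implicit. Unset Printing Implicit Defensive.
Import Order.TTheory GRing.Theory Num.Theory.
Local Open Scope ring_scope.

Inductive mtree (N : nat) : Type :=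
| MLeaf of 'I_N
| MNode of seq (mtree N).
Arguments MLeaf {N}.
Arguments MNode {N}.

Fixpoint label N (t : mtree N) : {set 'I_N} :=
  match t with
  | MLeaf n => [set n]
  | MNode cs => (fix U (cs : seq (mtree N)) : {set 'I_N} :=
                   match cs with
                   | [::] => set0
                   | c :: cs' => label c :|: U cs'
                   end) cs
  end.

Fixpoint leaves N (t : mtree N) : seq 'I_N :=
  match t with
  | MLeaf n => [:: n]
  | MNode cs => (fix L (cs : seq (mtree N)) : seq 'I_N :=
                   match cs with
                   | [::] => [::]
                   | c :: cs' => leaves c ++ L cs'
                   end) cs
  end.

Fixpoint subtrees N (t : mtree N) : seq (mtree N) :=
  t :: match t with
       | MLeaf _ => [::]
       | MNode cs => (fix S (cs : seq (mtree N)) : seq (mtree N) :=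
                        match cs with
                        | [::] => [::]
                        | c :: cs' => subtrees c ++ S cs'
                        end) cs
       end.

Definition children N (t : mtree N) : seq (mtree N) :=
  if t is MNode cs then cs else [::].

Definition is_interior N (t : mtree N) : bool :=
  if t is MNode _ then true else false.

(* t is a mode tree over [N]: its leaves are exactly {1},...,{N} (each once),
   interior nodes have at least one child, and distinct nodes have distinct
   labels (nodes are identified with their labels). *)
Definition mode_tree N (t : mtree N) : bool :=
  [&& perm_eq (leaves t) (enum 'I_N),
      all (fun s => if s is MNode cs then (0 < size cs)%N else true) (subtrees t)
    & uniq (map (@label N) (subtrees t))].

(* every node of t paired with the rank R_{Pa(node)} of its parent:
   R_{Pa(root)} = pr (= 1 at the top level), and for a child of an interior
   node nu, R_{Pa(child)} = R_nu = Rk (label nu). *)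
Fixpoint nodes_pr N (Rk : {set 'I_N} -> nat) (t : mtree N) (pr : nat)
  : seq (mtree N * nat) :=
  (t, pr) :: match t with
             | MLeaf _ => [::]
             | MNode cs => (fix S (cs : seq (mtree N)) : seq (mtree N * nat) :=
                              match cs with
                              | [::] => [::]
                              | c :: cs' => nodes_pr Rk c (Rk (label t)) ++ S cs'
                              end) cs
             end.

(* A tensor over nu ⊆ [N] is a real function on the
   multi-indices of shape nu (Some exactly on nu); its modes are thus
   labelled by the elements of nu (i.e. ordered ascendingly). *)
Definition midx N (D : 'I_N -> nat) := {dffun forall n : 'I_N, option 'I_(D n)}.

Definition has_shape N (D : 'I_N -> nat) (i : midx D) (nu : {set 'I_N}) : bool :=
  [forall n, (i n != None) == (n \in nu)].

Definition fnorm (R : rcfType) N (D : 'I_N -> nat) (nu : {set 'I_N})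
  (T : midx D -> R) : R :=
  Num.sqrt (\sum_(i : midx D | has_shape i nu) T i ^+ 2).

(* Frobenius norm of the tensor obtained by stacking (T r)_{r < K}
   (each a tensor over nu) along an additional last mode of size K *)
Definition stack_norm (R : rcfType) N (D : 'I_N -> nat) (nu : {set 'I_N})
  (K : nat) (T : nat -> midx D -> R) : R :=
  Num.sqrt (\sum_(i : midx D | has_shape i nu) \sum_(r < K) T r i ^+ 2).

Definition colnorm (R : rcfType) (rows : nat) (Wm : nat -> nat -> R) (r : nat) : R :=
  Num.sqrt (\sum_(r' < rows) Wm r' r ^+ 2).

(* Weight matrices are given entrywise (0-indexed): W nu r' r is the entry
   (r', r) of W^{(nu)} in R^{R_nu x R_{Pa(nu)}}; Rk nu = R_nu for interior nu
   (for a leaf {n}, R_{n} = D n).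
   itens W t r i = value of the intermediate tensor W^{(label t, r)} at the
   multi-index i (of shape label t). For an interior node, the tensor product
   of the children's tensors (which have disjoint mode sets) followed by the
   mode permutation pi_nu is, in the labelled-mode representation, the
   pointwise product of the children's values (each child reads only the
   coordinates in its own label). *)
Fixpoint itens (R : pzRingType) N (D : 'I_N -> nat) (Rk : {set 'I_N} -> nat)
  (W : {set 'I_N} -> nat -> nat -> R) (t : mtree N) (r : nat) (i : midx D)
  {struct t} : R :=
  match t with
  | MLeaf n => if i n is Some k then W [set n] (nat_of_ord k) r else 0
  | MNode cs =>
      \sum_(r' < Rk (label t))
        W (label t) r' r *
        (fix P (cs : seq (mtree N)) : R :=
           match cs with
           | [::] => 1
           | c :: cs' => @itens R N D Rk W c r' i * P cs'
           end) cs
  end.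

(* Main.v *)
Require Import Defs.
From HB Require Import structures.
From mathcomp Require Import all_boot all_order all_algebra.
From mathcomp Require Import ring lra.
From Stdlib Require List.
Import Order.TTheory GRing.Theory Num.Theory.
Local Open Scope ring_scope.
Set Implicit Arguments. Unset Strict Implicit.

Lemma cs_sum (R : rcfType) (K : nat) (a b : 'I_K -> R) :
  (\sum_i a i * b i) ^+ 2 <= (\sum_i a i ^+ 2) * (\sum_i b i ^+ 2).
Proof.
have H0 : 0 <= \sum_i \sum_j (a i * b j - a j * b i) ^+ 2.
  by apply: sumr_ge0 => i _; apply: sumr_ge0 => j _; exact: sqr_ge0.
have E : \sum_i \sum_j (a i * b j - a j * b i) ^+ 2 =
   (\sum_i a i ^+ 2) * (\sum_i b i ^+ 2) *+ 2 - (\sum_i a i * b i) ^+ 2 *+ 2.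
  have E1 : \sum_i \sum_j (a i * b j - a j * b i) ^+ 2 =
     \sum_i \sum_j (a i ^+ 2 * b j ^+ 2) + \sum_i \sum_j (a j ^+ 2 * b i ^+ 2)
     - (\sum_i \sum_j (a i * b i) * (a j * b j)) *+ 2.
    rewrite -sumrMnl -sumrN -!big_split /=; apply: eq_bigr => i _.
    rewrite -sumrMnl -sumrN -!big_split /=; apply: eq_bigr => j _.
    ring.
  rewrite E1 [X in _ + X - _]exchange_big /=.
  have E2 : \sum_i \sum_j (a i ^+ 2 * b j ^+ 2) = (\sum_i a i ^+ 2) * (\sum_i b i ^+ 2).
    by rewrite mulr_suml; apply: eq_bigr => i _; rewrite mulr_sumr.
  have E3 : \sum_i \sum_j (a i * b i) * (a j * b j) = (\sum_i a i * b i) ^+ 2.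
    by rewrite expr2 mulr_suml; apply: eq_bigr => i _; rewrite mulr_sumr.
  by rewrite E2 E3 !mulr2n.
move: H0; rewrite E subr_ge0 => H.
by rewrite !mulr2n in H; lra.
Qed.

Section Tree.
Variable N : nat.
Variable P : mtree N -> Prop.
Hypothesis HL : forall n, P (MLeaf n).
Hypothesis HN : forall cs, (forall c, List.In c cs -> P c) -> P (MNode cs).
Fixpoint mtree_ind' (t : mtree N) : P t :=
  match t with
  | MLeaf n => HL n
  | MNode cs => @HN cs
      ((fix F (cs : seq (mtree N)) : forall c, List.In c cs -> P c :=
         match cs with
         | [::] => fun c H => False_ind _ H
         | c0 :: cs' => fun c H =>
             match H with
             | or_introl E => eq_ind _ P (mtree_ind' c0) _ E
             | or_intror H' => F cs' c H'
             end
         end) cs)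
  end.
End Tree.

Section Main.
Variable R : rcfType.
Variable N : nat.
Variable D : 'I_N -> nat.
Variable Rk : {set 'I_N} -> nat.
Variable W : {set 'I_N} -> nat -> nat -> R.

Section P.
Variables (r' : nat) (i : midx D).
Fixpoint prodc (cs : seq (mtree N)) : R :=
  match cs with
  | [::] => 1
  | c :: cs' => @itens R N D Rk W c r' i * prodc cs'
  end.
End P.

Lemma itens_node cs r i : @itens R N D Rk W (MNode cs) r i =
  \sum_(r' < Rk (label (MNode cs))) W (label (MNode cs)) r' r * prodc r' i cs.
Proof. by []. Qed.

Lemma label_cons (c : mtree N) cs : label (MNode (c :: cs)) = label c :|: label (MNode cs).
Proof. by []. Qed.

Definition res (A : {set 'I_N}) (k : midx D) : midx D :=
  [ffun n => if n \in A then k n else None].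

Lemma itens_res t : forall (A : {set 'I_N}) (r : nat) (k : midx D), label t \subset A ->
  @itens R N D Rk W t r (res A k) = @itens R N D Rk W t r k.
Proof.
elim/mtree_ind': t => [n|cs IH] A r k sub.
  by rewrite /= ffunE; move: sub; rewrite /= sub1set => ->.
rewrite !itens_node; apply: eq_bigr => r' _; congr (_ * _).
move: (nat_of_ord r') => q; clear r'.
elim: cs IH sub => [|c cs IHcs] IH sub //=.
rewrite label_cons subUset in sub; case/andP: sub => s1 s2.
rewrite IH ?IHcs //=; first by move=> c' H; apply: IH; right.
by left.
Qed.


Lemma nodes_sub t : forall pr x p, List.In (x, p) (nodes_pr Rk t pr) -> List.In x (subtrees t).
Proof.
elim/mtree_ind': t => [n|cs IH] pr x p /=.
  by case=> // [[->]]; left.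
case=> [[-> _]|]; first by left.
move=> H; right; move: H; move: (Rk _) => q.
elim: cs IH => [|c cs IHcs] IH //= H.
case: (List.in_app_or _ _ _ H) => H'.
  by apply: List.in_or_app; left; apply: (IH c (or_introl erefl) q x p).
apply: List.in_or_app; right; apply: IHcs => //.
by move=> c' Hc'; apply: IH; right.
Qed.

Lemma allIn (T : Type) (pp : pred T) (s : seq T) x : all pp s -> List.In x s -> pp x.
Proof.
elim: s => [|y s IHs] //= /andP[h1 h2] [<-|H] //; exact: IHs.
Qed.

Lemma shapeN {k : midx D} {A} n : has_shape k A -> (k n != None) = (n \in A).
Proof. by move/forallP/(_ n)/eqP. Qed.

Lemma shape_res {k : midx D} {A B} : has_shape k (A :|: B) -> has_shape (res A k) A.
Proof.
move=> H; apply/forallP => n; rewrite ffunE.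
case: ifP => nA; last by [].
by rewrite (shapeN n H) inE nA.
Qed.

Lemma shape_resr {k : midx D} {A B} : has_shape k (A :|: B) -> has_shape (res B k) B.
Proof. by rewrite setUC; apply: shape_res. Qed.

Lemma res_inj A B : {in [set k : midx D | has_shape k (A :|: B)] &,
   injective (fun k => (res A k, res B k))}.
Proof.
move=> k1 k2; rewrite !inE => H1 H2 [EA EB].
apply/ffunP => n.
have := congr1 (fun f : midx D => f n) EA; have := congr1 (fun f : midx D => f n) EB.
rewrite /= !ffunE.
case: (boolP (n \in A)) => nA; first by move=> _ ->.
case: (boolP (n \in B)) => nB; first by move=> ->.
move=> _ _.
have h1 := shapeN n H1; have h2 := shapeN n H2.
rewrite inE (negbTE nA) (negbTE nB) /= in h1 h2.
by move/negbFE/eqP: h1 => ->; move/negbFE/eqP: h2 => ->.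
Qed.

Lemma diag_le (K : nat) (x y : 'I_K -> R) : (forall r, 0 <= x r) -> (forall r, 0 <= y r) ->
  \sum_r x r * y r <= (\sum_r x r) * (\sum_r y r).
Proof.
move=> hx hy; rewrite mulr_suml; apply: ler_sum => r _.
apply: ler_wpM2l => //; rewrite (bigD1 r) //= lerDl.
by apply: sumr_ge0 => j _.
Qed.

Lemma core (K : nat) (A B : {set 'I_N}) (f g : nat -> midx D -> R) :
  (forall r k, f r (res A k) = f r k) -> (forall r k, g r (res B k) = g r k) ->
  \sum_(k | has_shape k (A :|: B)) \sum_(r < K) (f r k * g r k) ^+ 2 <=
  (\sum_(i | has_shape i A) \sum_(r < K) f r i ^+ 2) *
  (\sum_(j | has_shape j B) \sum_(r < K) g r j ^+ 2).
Proof.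
move=> hf hg.
pose F (i j : midx D) := \sum_(r < K) f r i ^+ 2 * g r j ^+ 2.
apply: (@le_trans _ _ (\sum_(i | has_shape i A) \sum_(j | has_shape j B) F i j)); last first.
  rewrite mulr_suml; apply: ler_sum => i _; rewrite mulr_sumr; apply: ler_sum => j _.
  by apply: diag_le => r; apply: sqr_ge0.
rewrite [X in _ <= X]pair_big_dep /=.
set h := fun k : midx D => (res A k, res B k).
have E : \sum_(k | has_shape k (A :|: B)) \sum_(r < K) (f r k * g r k) ^+ 2 =
         \sum_(p in [set h x | x in [set k : midx D | has_shape k (A :|: B)]]) F p.1 p.2.
  rewrite big_imset; last exact: res_inj.
  apply: eq_big => [k|k _]; first by rewrite inE.
  by rewrite /F /h /= ; apply: eq_bigr => r _; rewrite hf hg exprMn.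
rewrite E big_mkcond [X in _ <= X]big_mkcond /=; apply: ler_sum => p _.
case: ifP => Hp; last first.
  by case: ifP => _ //; apply: sumr_ge0 => r _; apply: mulr_ge0; apply: sqr_ge0.
case/imsetP: Hp => k; rewrite inE => Hk ->.
by rewrite /= (shape_res Hk) (shape_resr Hk).
Qed.


Lemma prodc_res cs : forall (B : {set 'I_N}) r k, label (MNode cs) \subset B ->
  prodc r (res B k) cs = prodc r k cs.
Proof.
elim: cs => [|c cs IH] B r k //.
rewrite label_cons subUset => /andP[s1 s2] /=.
by rewrite itens_res // IH.
Qed.

Definition Sn (K : nat) (x : mtree N) : R :=
  \sum_(i | has_shape i (label x)) \sum_(r < K) @itens R N D Rk W x r i ^+ 2.

Lemma Sn_ge0 K x : 0 <= Sn K x.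
Proof. by apply: sumr_ge0 => i _; apply: sumr_ge0 => r _; apply: sqr_ge0. Qed.

Lemma prod_bound K cs : forall c,
  \sum_(k | has_shape k (label (MNode (c :: cs)))) \sum_(r < K) prodc r k (c :: cs) ^+ 2
  <= \prod_(x <- c :: cs) Sn K x.
Proof.
elim: cs => [|c' cs IH] c.
  rewrite big_cons big_nil mulr1 label_cons setU0 /Sn le_eqVlt //.
  apply/orP; left; apply/eqP; apply: eq_bigr => k _; apply: eq_bigr => r _; by rewrite /= mulr1.
rewrite label_cons big_cons.
apply: le_trans; last first.
  apply: ler_wpM2l; first exact: Sn_ge0.
  exact: IH.
rewrite /Sn.
apply: (@core K _ _ (fun r k => @itens R N D Rk W c r k) (fun r k => prodc r k (c' :: cs))).
  by move=> r k; apply: itens_res.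
by move=> r k; apply: prodc_res.
Qed.

Lemma prod_sqrt (s : seq (mtree N)) (F : mtree N -> R) : (forall x, 0 <= F x) ->
  \prod_(x <- s) Num.sqrt (F x) = Num.sqrt (\prod_(x <- s) F x).
Proof.
move=> h; elim: s => [|x s IH]; first by rewrite !big_nil sqrtr1.
by rewrite !big_cons IH sqrtrM.
Qed.

End Main.

Theorem lemma7 (R : rcfType) (N : nat) (D : 'I_N -> nat)
  (Rk : {set 'I_N} -> nat) (W : {set 'I_N} -> nat -> nat -> R) (t : mtree N) :
  mode_tree t ->
  (forall n, (0 < D n)%N) ->
  (forall s, List.In s (subtrees t) -> is_interior s -> (0 < Rk (label s))%N) ->
  forall (nu : mtree N) (pr : nat),
    List.In (nu, pr) (nodes_pr Rk t 1) -> is_interior nu ->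
    forall r : nat, (r < pr)%N ->
      @fnorm R N D (label nu) (@itens R N D Rk W nu r)
      <= @colnorm R (Rk (label nu)) (W (label nu)) r *
         \prod_(c <- children nu)
            @stack_norm R N D (label c) (Rk (label nu)) (@itens R N D Rk W c).
Proof.
move=> mt hD hRk nu pr Hin Hint r Hr.
have Hs := nodes_sub Hin.
case: nu Hin Hint Hs => [n|cs] // _ _ Hs.
have Hcs : (0 < size cs)%N.
  by move: mt => /and3P[_ Hall _]; have := allIn Hall Hs.
case: cs Hcs Hs => [|c cs] // _ _.
set K := Rk (label (MNode (c :: cs))).
set A := label (MNode (c :: cs)).
rewrite /fnorm /colnorm.
have -> : \prod_(x <- children (MNode (c :: cs)))
            @stack_norm R N D (label x) K (@itens R N D Rk W x)
          = \prod_(x <- c :: cs) Num.sqrt (Sn D Rk W K x) by [].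
rewrite prod_sqrt; last by move=> x; apply: Sn_ge0.
have HW : 0 <= \sum_(r' < K) W A r' r ^+ 2 by apply: sumr_ge0 => j _; apply: sqr_ge0.
have HP : 0 <= \prod_(x <- c :: cs) Sn D Rk W K x.
  by apply: prodr_ge0 => x _; apply: Sn_ge0.
rewrite -sqrtrM // ler_sqrt; last exact: mulr_ge0.
apply: (@le_trans _ _ ((\sum_(r' < K) W A r' r ^+ 2) *
   \sum_(i | has_shape i A) \sum_(r' < K) prodc Rk W r' i (c :: cs) ^+ 2)).
  rewrite mulr_sumr; apply: ler_sum => i _; rewrite itens_node.
  exact: (cs_sum (fun r' : 'I_K => W A r' r) (fun r' : 'I_K => prodc Rk W r' i (c :: cs))).
apply: ler_wpM2l => //.
exact: prod_bound.
Qed.
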